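(* Let $A(x)=-(x-\frac13)^2$ on $[0,1]$, with the two maps $\tau_1(x)=x/2$ and $\tau_2(x)=(x+1)/2$ (the inverse branches of $T(x)=2x \pmod 1$). Let $V_1(x)=\frac{10}{63}-\frac{2x}{21}-\frac{x^2}{3}$, $V_2(x)=\frac{5}{63}+\frac{2x}{7}-\frac{x^2}{3}$, $V_3(x)=\frac{10x}{21}-\frac{x^2}{3}$, $V_4(x)=-\frac{5}{63}+\frac{4x}{7}-\frac{x^2}{3}$, and $V(x)=\max\{V_1(x),V_2(x),V_3(x),V_4(x)\}$. Then $m(A)=-\frac{2}{63}$ and $V$ is a calibrated subaction for $A$, i.e. for every $x\in[0,1]$, $$V(x)=\max\{A(\tau_1(x))+V(\tau_1(x)),\,A(\tau_2(x))+V(\tau_2(x))\}-m(A).$$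
   Context: $m(A)$ denotes the supremum of $\int A\,d\rho$ over probabilities $\rho$ invariant for $T(x)=2x\pmod 1$. A calibrated subaction (in this non-periodic setting on $[0,1]$) is a continuous $V:[0,1]\to\mathbb{R}$ with $V(x)=\max_{i\in\{1,2\}}[A(\tau_i(x))+V(\tau_i(x))]-m(A)$ for all $x\in[0,1]$. *)

(* Defs.v *)
From HB Require Import structures.
From mathcomp Require Import all_boot all_order all_algebra.
From mathcomp Require Import all_classical all_reals all_analysis.
Set Implicit Arguments. Unset Strict Implicit. Unset Printing Implicit Defensive.
Import Order.TTheory GRing.Theory Num.Theory.
Import numFieldNormedType.Exports.
Local Open Scope classical_set_scope.
Local Open Scope ring_scope.

Definition doubling (R : realType) (x : R) : R := 2 * x - (Num.floor (2 * x))%:~R.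

Definition tau1 (R : realType) (x : R) : R := x / 2.
Definition tau2 (R : realType) (x : R) : R := (x + 1) / 2.

Definition T_invariant_prob (R : realType) (mu : probability R R) : Prop :=
  mu `[0%R, 1%R]%classic = 1%E /\
  forall B : set R, measurable B ->
    mu (doubling (R:=R) @^-1` B `&` `[0%R, 1%R]%classic) = mu (B `&` `[0%R, 1%R]%classic).

Definition m_erg (R : realType) (A : R -> R) : \bar R :=
  ereal_sup [set (\int[mu]_(x in `[0%R, 1%R]%classic) (A x)%:E)%E
            | mu in [set mu : probability R R | T_invariant_prob mu]].

Definition calibrated_subaction (R : realType) (A V : R -> R) : Prop :=
  {within `[0%R, 1%R]%classic, continuous V} /\
  forall x : R, x \in `[0, 1] ->
    V x = Num.max (A (tau1 x) + V (tau1 x)) (A (tau2 x) + V (tau2 x))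
          - fine (m_erg A).

Definition A0 (R : realType) (x : R) : R := - (x - 3^-1) ^+ 2.
Definition V1 (R : realType) (x : R) : R := 10 / 63 - 2 * x / 21 - x ^+ 2 / 3.
Definition V2 (R : realType) (x : R) : R := 5 / 63 + 2 * x / 7 - x ^+ 2 / 3.
Definition V3 (R : realType) (x : R) : R := 10 * x / 21 - x ^+ 2 / 3.
Definition V4 (R : realType) (x : R) : R := - (5 / 63) + 4 * x / 7 - x ^+ 2 / 3.
Definition V0 (R : realType) (x : R) : R :=
  Num.max (Num.max (V1 x) (V2 x)) (Num.max (V3 x) (V4 x)).

(* Main.v *)
Require Import Defs.
From HB Require Import structures.
From mathcomp Require Import all_boot all_order all_algebra.
From mathcomp Require Import all_classical all_reals all_analysis.
From mathcomp Require Import ring lra measurable_realfun.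
Import Order.TTheory GRing.Theory Num.Theory.
Import numFieldNormedType.Exports.
Local Open Scope classical_set_scope.
Local Open Scope ring_scope.

Ltac orlra := first [ lra | apply/orP; first [ left; orlra | right; orlra ] ].

Lemma addmax (R : realDomainType) (e a b : R) :
  e + Num.max a b = Num.max (e + a) (e + b).
Proof. by rewrite !maxEle lerD2l; case: ifP. Qed.


Lemma calib_gen (R : realType) (x : R) : 0 <= x <= 1 ->
  V0 x = Num.max (A0 (tau1 x) + V0 (tau1 x)) (A0 (tau2 x) + V0 (tau2 x)) + 2/63.
Proof.
move=> /andP[x0 x1].
rewrite /V0 !addmax.
set q := x ^+ 2 / 3.
have e1 : V1 x = 10/63 - 2 * x / 21 - q by [].
have e2 : V2 x = 5/63 + 2 * x / 7 - q by [].
have e3 : V3 x = 10 * x / 21 - q by [].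
have e4 : V4 x = - (5/63) + 4 * x / 7 - q by [].
have f1 : A0 (tau1 x) + V1 (tau1 x) = 5/63 + 2/7 * x - q - 2/63.
  by rewrite /A0 /V1 /tau1 /q; field.
have f2 : A0 (tau1 x) + V2 (tau1 x) = 0 + 10/21 * x - q - 2/63.
  by rewrite /A0 /V2 /tau1 /q; field.
have f3 : A0 (tau1 x) + V3 (tau1 x) = -5/63 + 4/7 * x - q - 2/63.
  by rewrite /A0 /V3 /tau1 /q; field.
have f4 : A0 (tau1 x) + V4 (tau1 x) = -10/63 + 13/21 * x - q - 2/63.
  by rewrite /A0 /V4 /tau1 /q; field.
have g1 : A0 (tau2 x) + V1 (tau2 x) = 2/63 - 8/21 * x - q - 2/63.
  by rewrite /A0 /V1 /tau2 /q; field.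
have g2 : A0 (tau2 x) + V2 (tau2 x) = 1/7 - 4/21 * x - q - 2/63.
  by rewrite /A0 /V2 /tau2 /q; field.
have g3 : A0 (tau2 x) + V3 (tau2 x) = 10/63 - 2/21 * x - q - 2/63.
  by rewrite /A0 /V3 /tau2 /q; field.
have g4 : A0 (tau2 x) + V4 (tau2 x) = 8/63 - 1/21 * x - q - 2/63.
  by rewrite /A0 /V4 /tau2 /q; field.
rewrite e1 e2 e3 e4 f1 f2 f3 f4 g1 g2 g3 g4 [RHS]addrC !addmax.
have [h|h] := lerP x (2/3);
  apply/eqP; rewrite eq_le; apply/andP; split;
  rewrite ?ge_max ?le_max; repeat (apply/andP; split); orlra.
Qed.


Section S.
Variable R : realType.

Lemma doubling_itv (x : R) : 0 <= doubling x < 1.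
Proof.
rewrite /doubling; have /andP[h1 h2] := floor_itv (2 * x).
rewrite intrD in h2; apply/andP; split; lra.
Qed.

Lemma measurable_doubling : measurable_fun setT (@doubling R).
Proof.
apply: (@measurable_realfun.measurable_funB _ _ _ _ (fun x : R => 2 * x) (fun x : R => (Num.floor (2 * x))%:~R)).
  exact: mulrl_measurable.
apply: measurable_realfun.nondecreasing_measurable => //= a b ab.
by rewrite ler_int le_floor // ler_pM2l.
Qed.

Lemma V0_cont : continuous (@V0 R).
Proof.
have h1 : (@V1 R) = fun x => ((10/63)%:P - (2/21) *: 'X - (1/3) *: 'X^2 : {poly R}).[x].
  by apply/funext => x; rewrite !(hornerD, hornerN, hornerZ, hornerC, hornerX, hornerXn) /V1; field.
have h2 : (@V2 R) = fun x => ((5/63)%:P + (2/7) *: 'X - (1/3) *: 'X^2 : {poly R}).[x].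
  by apply/funext => x; rewrite !(hornerD, hornerN, hornerZ, hornerC, hornerX, hornerXn) /V2; field.
have h3 : (@V3 R) = fun x => ((10/21) *: 'X - (1/3) *: 'X^2 : {poly R}).[x].
  by apply/funext => x; rewrite !(hornerD, hornerN, hornerZ, hornerC, hornerX, hornerXn) /V3; field.
have h4 : (@V4 R) = fun x => ((-(5/63))%:P + (4/7) *: 'X - (1/3) *: 'X^2 : {poly R}).[x].
  by apply/funext => x; rewrite !(hornerD, hornerN, hornerZ, hornerC, hornerX, hornerXn) /V4; field.
move=> x; rewrite /V0.
apply: (@continuous_max _ _ (fun x => Num.max (V1 x) (V2 x)) (fun x => Num.max (V3 x) (V4 x))).
  apply: (@continuous_max _ _ (@V1 R) (@V2 R)).
    by rewrite h1; exact: continuous_horner.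
  by rewrite h2; exact: continuous_horner.
apply: (@continuous_max _ _ (@V3 R) (@V4 R)).
  by rewrite h3; exact: continuous_horner.
by rewrite h4; exact: continuous_horner.
Qed.


Lemma A0_cont : continuous (@A0 R).
Proof.
have -> : (@A0 R) = fun x => ((-(1/9))%:P + (2/3) *: 'X - 'X^2 : {poly R}).[x].
  by apply/funext => x; rewrite !(hornerD, hornerN, hornerZ, hornerC, hornerX, hornerXn) /A0; field.
move=> x; exact: continuous_horner.
Qed.

Lemma cont_mE (f : R -> R) (E : set R) : continuous f -> measurable E ->
  measurable_fun E (fun x => (f x)%:E).
Proof.
move=> cf mE; apply/measurable_EFinP.
exact: (measurable_funS measurableT (@subsetT _ E) (continuous_measurable_fun cf)).
Qed.
Arguments cont_mE {f E}.

Lemma calib (x : R) : 0 <= x <= 1 ->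
  V0 x = Num.max (A0 (tau1 x) + V0 (tau1 x)) (A0 (tau2 x) + V0 (tau2 x)) + 2/63.
Proof. exact: calib_gen. Qed.

Lemma V0_ge0 y : 0 <= y <= 1 -> 0 <= @V0 R y.
Proof.
move=> /andP[y0 y1]; rewrite /V0 !le_max; apply/orP; right; apply/orP; left.
rewrite /V3; nra.
Qed.

Lemma V0_le1 y : 0 <= y <= 1 -> @V0 R y <= 1.
Proof.
move=> /andP[y0 y1]; rewrite /V0 /V1 /V2 /V3 /V4 !ge_max.
have : 0 <= y ^+ 2 by rewrite sqr_ge0.
move=> h; repeat (apply/andP; split); lra.
Qed.

Lemma key_ineq (x : R) : 0 <= x <= 1 -> A0 x + V0 x + 2/63 <= V0 (doubling x).
Proof.
move=> /andP[x0 x1].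
have [xh|xh] := ltrP x (1/2).
  have fl : Num.floor (2 * x) = 0.
    by apply/floor_def; rewrite add0r /=; apply/andP; split; lra.
  have -> : doubling x = 2 * x by rewrite /doubling fl subr0.
  rewrite [V0 (2 * x)]calib; last by apply/andP; split; lra.
  have -> : tau1 (2 * x) = x by rewrite /tau1; field.
  by rewrite lerD2r le_max lexx.
have [x1'|x1'] := ltrP x 1.
  have fl : Num.floor (2 * x) = 1.
    by apply/floor_def; rewrite intrD /=; apply/andP; split; lra.
  have -> : doubling x = 2 * x - 1 by rewrite /doubling fl.
  rewrite [V0 (2 * x - 1)]calib; last by apply/andP; split; lra.
  have -> : tau2 (2 * x - 1) = x by rewrite /tau2; field.
  by rewrite lerD2r le_max lexx orbT.
have -> : x = 1 by apply/le_anti; rewrite x1 x1'.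
have -> : doubling 1 = 0 :> R.
  rewrite /doubling mulr1.
  have -> : Num.floor (2 : R) = 2 by apply/floor_def; rewrite intrD /=; apply/andP; split; lra.
  by rewrite subrr.
have h1 : V0 1 <= 10/63 :> R.
  rewrite /V0 /V1 /V2 /V3 /V4 !expr1n !ge_max; repeat (apply/andP; split); lra.
have h2 : 10/63 <= V0 0 :> R.
  rewrite /V0 /V1 /V2 /V3 /V4 !expr0n /= !mulr0 !mul0r !le_max; orlra.
have h3 : A0 1 = -(4/9) :> R by rewrite /A0 expr2; field.
lra.
Qed.

Lemma dbl17 : @doubling R (1/7) = (2/7).
Proof.
rewrite /doubling (_ : Num.floor (2 * (1/7) : R) = 0); first by rewrite subr0; field.
by apply/floor_def; rewrite add0r /=; apply/andP; split; lra.
Qed.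
Lemma dbl27 : @doubling R (2/7) = (4/7).
Proof.
rewrite /doubling (_ : Num.floor (2 * (2/7) : R) = 0); first by rewrite subr0; field.
by apply/floor_def; rewrite add0r /=; apply/andP; split; lra.
Qed.
Lemma dbl47 : @doubling R (4/7) = (1/7).
Proof.
rewrite /doubling (_ : Num.floor (2 * (4/7) : R) = 1); first by rewrite /=; field.
by apply/floor_def; rewrite intrD /=; apply/andP; split; lra.
Qed.

Local Notation D := (`[(0:R), (1:R)]%classic).

Local Open Scope ereal_scope.
Lemma upper (mu : probability R R) : T_invariant_prob mu ->
  (\int[mu]_(x in D) (A0 x)%:E <= (-(2/63))%R%:E)%E.
Proof.
move=> [muD inv].
have mD : measurable D := measurable_itv _.
have Dmem y : D y -> (0 <= y <= 1)%R by rewrite /= in_itv.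
pose nu := mrestr mu mD.
pose Vf := fun y : R => (V0 y)%:E.
have mVT : measurable_fun setT Vf := cont_mE V0_cont measurableT.
have mVD : measurable_fun D Vf := cont_mE V0_cont mD.
have mVTD : measurable_fun D (Vf \o (@doubling R)).
  exact: (measurableT_comp mVT (measurable_funS measurableT (@subsetT _ _) (@measurable_doubling))).
have mVTN : measurable_fun (~` D) (Vf \o (@doubling R)).
  exact: (measurableT_comp mVT (measurable_funS measurableT (@subsetT _ _) (@measurable_doubling))).
have mAD : measurable_fun D (fun x => (- A0 x)%R%:E).
  have cA : continuous (fun x : R => (- A0 x)%R).
    by move=> x; apply: continuousN; exact: A0_cont.
  exact: (cont_mE cA mD).
have Vf0 y : D y -> (0 <= Vf y)%E by move=> /Dmem h; rewrite lee_fin V0_ge0.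
have VfT0 y : (0 <= Vf ((@doubling R) y))%E.
  by rewrite lee_fin V0_ge0 // (andP (doubling_itv y)).1 ltW // (andP (doubling_itv y)).2.
have A0n (y : R) : (0 <= (- A0 y)%R%:E)%E by rewrite lee_fin /A0 opprK sqr_ge0.
have eqT : \int[nu]_(x in (@doubling R) @^-1` D) (Vf \o (@doubling R)) x = \int[nu]_(x in D) Vf x.
  rewrite -(@ge0_integral_pushforward _ _ _ _ R (@doubling R) measurable_doubling nu D Vf mD mVD); last first.
    by move=> y /[!inE] /Vf0.
  apply: (eq_measure_integral nu); first exact: measurable_doubling.
  by move=> mf A mA AD; rewrite /= /mrestr /pushforward inv.
have preT : (@doubling R) @^-1` D = setT.
  apply/seteqP; split => y //= _.
  by rewrite in_itv /= (andP (doubling_itv y)).1 ltW // (andP (doubling_itv y)).2.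
rewrite preT in eqT.
have eq3 : \int[nu]_(x in setT) (Vf \o (@doubling R)) x = \int[nu]_(x in D) (Vf \o (@doubling R)) x.
  rewrite -(setUCr D) ge0_integral_setU //.
  - rewrite (@null_set_integral _ _ _ nu (~` D)) ?adde0 //; first exact: measurableC.
    by rewrite /nu /= /mrestr setICl measure0.
  - exact: measurableC.
  - rewrite setUCr; exact: (measurableT_comp mVT measurable_doubling).
  - by move=> y _; exact: VfT0.
  - by rewrite disj_set2E setICr.
have eq4 f : \int[nu]_(x in D) f x = \int[mu]_(x in D) f x.
  by apply: eq_measure_integral => A mA AD; rewrite /= /mrestr setIidl.
have eqV : \int[mu]_(x in D) (Vf \o (@doubling R)) x = \int[mu]_(x in D) Vf x.
  by rewrite -!eq4 -eq3 eqT.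
have H : (\int[mu]_(x in D) (Vf x + (2/63)%R%:E) <= \int[mu]_(x in D) ((Vf \o (@doubling R)) x + (- A0 x)%R%:E))%E.
  apply: ge0_le_integral => //.
  - by move=> y Dy; rewrite adde_ge0 // ?Vf0 // lee_fin.
  - by apply: emeasurable_funD => //; exact: measurable_cst.
  - by apply: emeasurable_funD.
  - move=> y /Dmem Dy; rewrite /Vf /= -!EFinD lee_fin.
    have := @key_ineq y Dy; lra.
rewrite ge0_integralD // in H.
rewrite ge0_integralD // in H.
have H2 : \int[mu]_(x in D) Vf x + (2/63)%R%:E <= \int[mu]_(x in D) Vf x + \int[mu]_(x in D) (- A0 x)%R%:E.
  have eqle (a b : \bar R) : a = b -> a <= b by move=> ->.
  apply: le_trans (le_trans H _).
    apply: eqle; congr (_ + _).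
    rewrite (integral_cst _ mD) -[LHS]mule1; congr (_ * _); exact: (esym muD).
  by apply: eqle; congr (_ + _); exact: eqV.
have fin : \int[mu]_(x in D) Vf x \is a fin_num.
  rewrite ge0_fin_numE; last by apply: integral_ge0.
  apply: (@le_lt_trans _ _ (\int[mu]_(x in D) (cst 1%:E) x)).
    apply: ge0_le_integral => //.
    by move=> y /Dmem h; rewrite lee_fin V0_le1.
  rewrite (integral_cst _ mD) [X in _ * X](_ : _ = 1%E); last exact: muD.
  by rewrite mule1 ltey.
rewrite leeD2lE // in H2.
have -> : \int[mu]_(x in D) (A0 x)%:E = \int[mu]_(x in D) - ((- A0 x)%R%:E).
  by apply: eq_integral => x _; rewrite -EFinN opprK.
by rewrite integral_ge0N // EFinN leeN2.
by move=> y _; exact: VfT0.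
Qed.


Definition b := measure_add (measure_add (\d_(1/7 : R)%R : {measure set R -> \bar R}) \d_(2/7 : R)%R) \d_(4/7 : R)%R.
Lemma bE A : b A = \d_(1/7 : R)%R A + \d_(2/7 : R)%R A + \d_(4/7 : R)%R A.
Proof.
rewrite /b measure_addE; congr (_ + _); exact: measure_addE.
Qed.
Let third_ge0 : (0 <= 1/3 :> R)%R. Proof. by []. Qed.
Definition mu0 := mscale (NngNum third_ge0) b.
HB.instance Definition _ := Measure.on mu0.
Lemma mu0E A : mu0 A = (1/3)%R%:E * b A.
Proof. by []. Qed.
Let mu0_setT : mu0 setT = 1.
Proof.
rewrite mu0E bE !diracT -!EFinD -EFinM; congr (_%:E).
lra.
Qed.
HB.instance Definition _ := Measure_isProbability.Build _ _ R mu0 mu0_setT.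
Lemma intmu0 (g : R -> R) (E : set R) : measurable E -> measurable_fun E (fun x => (g x)%:E) -> (forall x, E x -> (0 <= g x)%R) ->
  E (1/7)%R -> E (2/7)%R -> E (4/7)%R ->
  \int[mu0]_(x in E) (g x)%:E = (1/3)%R%:E * ((g (1/7))%:E + (g (2/7))%:E + (g (4/7))%:E).
Proof.
move=> mE mf f0 D1 D2 D4.
have f0' x : E x -> 0 <= (g x)%:E by move=> /f0; rewrite lee_fin.
rewrite (eq_measure_integral (mscale (NngNum third_ge0) b)) //.
rewrite ge0_integral_mscale //.
rewrite /b !ge0_integral_measure_add //.
rewrite !integral_dirac // !diracE !mem_set // !mul1e.
by [].
Qed.

Lemma memPI (a : R) (B : set R) : D a ->
  (a \in (@doubling R) @^-1` B `&` D) = (@doubling R a \in B).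
Proof.
move=> Da; rewrite in_setI (mem_set Da) andbT.
by apply/idP/idP => /set_mem h; apply: mem_set.
Qed.

Lemma memI (a : R) (B : set R) : D a -> (a \in B `&` D) = (a \in B).
Proof. by move=> Da; rewrite in_setI (mem_set Da) andbT. Qed.

Lemma mu0_inv : T_invariant_prob mu0.
Proof.
have D17 : D (1/7 : R)%R by rewrite /= in_itv /=; apply/andP; split; lra.
have D27 : D (2/7 : R)%R by rewrite /= in_itv /=; apply/andP; split; lra.
have D47 : D (4/7 : R)%R by rewrite /= in_itv /=; apply/andP; split; lra.
have E (A : set R) : (mu0 : probability R R) A = (1/3)%R%:E * (\d_(1/7 : R)%R A + \d_(2/7 : R)%R A + \d_(4/7 : R)%R A).
  by rewrite -bE.
split.
  rewrite E !diracE !mem_set // -!EFinD -EFinM; congr (_%:E); rewrite /= -[true%:R]/(1%R : R); lra.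
move=> B mB; rewrite !E !diracE !memPI // !memI // dbl17 dbl27 dbl47 -!EFinD.
congr (_ * _%:E); ring.
Qed.

Lemma integral_mu0 : \int[mu0]_(x in D) (A0 x)%:E = (-(2/63))%R%:E.
Proof.
have mD : measurable D := measurable_itv _.
have D17 : D (1/7 : R)%R by rewrite /= in_itv /=; apply/andP; split; lra.
have D27 : D (2/7 : R)%R by rewrite /= in_itv /=; apply/andP; split; lra.
have D47 : D (4/7 : R)%R by rewrite /= in_itv /=; apply/andP; split; lra.
have A0n (y : R) : 0 <= (- A0 y)%R%:E by rewrite lee_fin /A0 opprK sqr_ge0.
have mAD : measurable_fun D (fun x => (- A0 x)%R%:E).
  have cA : continuous (fun x : R => (- A0 x)%R).
    by move=> x; apply: continuousN; exact: A0_cont.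
  exact: (cont_mE cA mD).
have -> : \int[mu0]_(x in D) (A0 x)%:E = \int[mu0]_(x in D) - ((- A0 x)%R%:E).
  by apply: eq_integral => x _; rewrite -EFinN opprK.
rewrite integral_ge0N //.
have -> := @intmu0 (fun x => (- A0 x)%R) D mD mAD.
- rewrite -!EFinD -EFinM -EFinN; congr (_%:E).
  by rewrite /A0 !expr2; field.
- by move=> x _; rewrite /A0 opprK sqr_ge0.
- exact: D17.
- exact: D27.
- exact: D47.
Qed.

End S.

Theorem mainTheorem2 (R : realType) :
  m_erg (@A0 R) = (- (2 / 63))%:E /\ calibrated_subaction (@A0 R) (@V0 R).
Proof.
have hm : m_erg (@A0 R) = (- (2 / 63))%:E.
  apply/le_anti/andP; split.
    apply: ge_ereal_sup => _ [mu /= Hmu <-]; exact: upper.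
  apply: ereal_sup_ubound => /=; exists (mu0 R); first exact: mu0_inv.
  exact: integral_mu0.
split => //; split.
  apply: continuous_subspaceT; exact: V0_cont.
move=> x; rewrite in_itv /= => hx; rewrite hm /= opprK; exact: calib.
Qed.
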